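(* Let $Q$ be a finite Moufang loop, $S\le Q$, and $x,y\in Q$ with $xS\cap yS\neq\emptyset$. Let $f_{x,y}:xS\cap yS\to xS\cap yS$ be the permutation $xs\mapsto ys$. Let $xs=yr\in xS\cap yS$ with $s,r\in S$. Then $xs$ belongs to a cycle of $f_{x,y}$ whose length is the order $|sr^{-1}|$ of the element $sr^{-1}\in S$. In particular, if $S\neq 1$, then $|xS\cap yS|$ can be written as a sum of orders of some (possibly repeated) nonidentity elements of $S$.
   Context: A Moufang loop is a loop satisfying $((xy)x)z=x(y(xz))$ (equivalently $((xy)z)y=x(y(zy))$, etc.); Moufang loops have two-sided inverses $x^{-1}$ and are right Bol, which guarantees that $f_{x,y}$ is a well-defined permutation of $xS\cap yS$. Here $xS=\{xs:s\in S\}$. *)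

(* Defs.v *)
From mathcomp Require Import all_boot.
Set Implicit Arguments. Unset Strict Implicit. Unset Printing Implicit Defensive.

Section Loops.
Variable T : finType.
Variable mul : T -> T -> T.
Variable e : T.

Definition is_loop : Prop :=
  (forall a, mul e a = a) /\ (forall a, mul a e = a) /\
  (forall a b, exists! x, mul a x = b) /\
  (forall a b, exists! y, mul y a = b).

Definition is_moufang_loop : Prop :=
  is_loop /\ forall x y z, mul (mul (mul x y) x) z = mul x (mul y (mul x z)).

Definition is_subloop (S : {set T}) : Prop :=
  e \in S /\
  (forall a b, a \in S -> b \in S -> mul a b \in S) /\
  (forall a b x, a \in S -> b \in S -> mul a x = b -> x \in S) /\
  (forall a b y, a \in S -> b \in S -> mul y a = b -> y \in S).

Definition lcoset (x : T) (S : {set T}) : {set T} := [set mul x s | s in S].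

Definition ldiv (x z : T) : T := odflt z [pick s | mul x s == z].

(* Inverse (two-sided in a Moufang loop). *)
Definition linv (a : T) : T := odflt a [pick b | mul a b == e].

(* f_{x,y} : x s |-> y s, i.e. z |-> y (x \ z); a permutation of xS ∩ yS. *)
Definition fxy (x y : T) (z : T) : T := mul y (ldiv x z).

(* Powers a^n (well defined in Moufang loops by diassociativity). *)
Fixpoint lpow (a : T) (n : nat) : T :=
  if n is m.+1 then mul a (lpow a m) else e.

Definition is_order (a : T) (n : nat) : Prop :=
  0 < n /\ lpow a n = e /\ forall m, 0 < m < n -> lpow a m <> e.

End Loops.

(* Main.v *)
Require Import Defs.
From mathcomp Require Import all_boot.
Set Implicit Arguments. Unset Strict Implicit. Unset Printing Implicit Defensive.

Section Alg.
Variable T : finType.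
Variable mul : T -> T -> T.
Variable e : T.
Hypothesis hQ : is_moufang_loop mul e.
Local Notation "a * b" := (mul a b).
Local Notation iv := (linv mul e).

Lemma mul1 a : e * a = a. Proof. by case: hQ => [[]]. Qed.
Lemma mul1r a : a * e = a. Proof. by case: hQ => [[? []]]. Qed.
Lemma lcan a b c : a * b = a * c -> b = c.
Proof.
case: hQ => [[_ [_ [H _]]] _] E; case: (H a (a * b)) => u [_ Hu].
by rewrite -(Hu b) // (Hu c).
Qed.
Lemma rcan a b c : b * a = c * a -> b = c.
Proof.
case: hQ => [[_ [_ [_ H]]] _] E; case: (H a (b * a)) => u [_ Hu].
by rewrite -(Hu b) // (Hu c).
Qed.
Lemma ldivP x z : x * ldiv mul x z = z.
Proof.
rewrite /ldiv; case: pickP => [s /eqP //|H].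
case: hQ => [[_ [_ [H2 _]]] _]; case: (H2 x z) => u [Hu _].
by move: (H u); rewrite Hu eqxx.
Qed.
Lemma ldivK x s : ldiv mul x (x * s) = s.
Proof. by apply: (@lcan x); rewrite ldivP. Qed.
Lemma linvP a : a * (iv a) = e.
Proof.
rewrite /linv; case: pickP => [s /eqP //|H].
case: hQ => [[_ [_ [H2 _]]] _]; case: (H2 a e) => u [Hu _].
by move: (H u); rewrite Hu eqxx.
Qed.
Lemma moufang a b c : ((a * b) * a) * c = a * (b * (a * c)).
Proof. by case: hQ. Qed.
Lemma flex a b : (a * b) * a = a * (b * a).
Proof. by have := moufang a b e; rewrite !mul1r. Qed.
Lemma LIP a c : (iv a) * (a * c) = c.
Proof.
have := moufang a (iv a) c; rewrite linvP mul1 => H.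
by apply: (@lcan a); rewrite -H.
Qed.
Lemma linvl a : (iv a) * a = e.
Proof. by have := LIP a e; rewrite mul1r. Qed.
Lemma RIP w a : (w * a) * (iv a) = w.
Proof.
have := moufang a (ldiv mul a w) (iv a); rewrite linvP mul1r ldivP //.
Qed.
Lemma linvK a : iv (iv a) = a.
Proof. by apply: (@lcan (iv a)); rewrite linvP linvl. Qed.
Lemma linvM a b : (iv (a * b)) = (iv b) * (iv a).
Proof.
have H1 := LIP (a * b) (iv b); rewrite RIP in H1.
by rewrite -H1 RIP.
Qed.
Lemma rbol p q c : ((p * q) * c) * q = p * (q * (c * q)).
Proof.
have := moufang (iv q) (iv c) (iv p).
move/(congr1 (linv mul e)); rewrite !linvM !linvK => <-.
by rewrite -flex.
Qed.
Lemma step x y u v : x * u = y * v -> y * u = x * ((u * (iv v)) * u).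
Proof.
move=> E; have -> : y = (x * u) * (iv v) by rewrite E RIP.
by rewrite rbol flex.
Qed.
Lemma lpow_iter a n : lpow mul e a n = iter n (mul a) e.
Proof. by elim: n => //= n ->. Qed.
Lemma powL a n z : lpow mul e a n * z = iter n (mul a) z.
Proof.
elim: n {-2}n (leqnn n) z => [|k IH] n Hn z.
  by move: Hn; rewrite leqn0 => /eqP ->; rewrite /= mul1.
case: n Hn => [|n] Hn; first by rewrite /= mul1.
case: n Hn => [|n] Hn; first by rewrite /= mul1r.
have E : lpow mul e a n.+2 = (a * lpow mul e a n) * a.
  rewrite [RHS]/=; change (a * lpow mul e a n) with (lpow mul e a n.+1).
  rewrite (IH n.+1) // lpow_iter.
  by rewrite iterSr mul1r.
rewrite E moufang (IH n) ?(leq_trans _ Hn) //; last first.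
exact: ltnW Hn.
by rewrite iterS iterSr.
Qed.

Lemma fxy_inj x y : injective (fxy mul x y).
Proof.
move=> z1 z2; rewrite /fxy => /lcan E.
by rewrite -(ldivP x z1) E ldivP.
Qed.

Lemma iter_key x y s r : x * s = y * r -> forall m,
  iter m (fxy mul x y) (x * s) = x * (lpow mul e (s * iv r) m * s).
Proof.
move=> E m; rewrite powL; set a := s * iv r.
suff : exists v, iter m (fxy mul x y) (x * s) = x * iter m (mul a) s /\
   y * v = x * iter m (mul a) s /\ iter m (mul a) s * iv v = a by case=> v [].
elim: m => [|m [v [H1 [H2 H3]]]]; first by exists r.
exists (iter m (mul a) s); rewrite !iterS H1 /fxy ldivK.
have -> := step (esym H2); rewrite H3; split => //; split => //.
by rewrite RIP.
Qed.

Lemma iter_fix x y s r m : x * s = y * r ->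
  (iter m (fxy mul x y) (x * s) = x * s) <-> lpow mul e (s * iv r) m = e.
Proof.
move=> E; rewrite (iter_key E); split.
  by move/lcan => H; apply: (@rcan s); rewrite H mul1.
by move=> ->; rewrite mul1.
Qed.

Lemma part1 x y s r : x * s = y * r ->
  let n := order (fxy mul x y) (x * s) in
  is_order mul e (s * iv r) n /\
  iter n (fxy mul x y) (x * s) = x * s /\
  (forall m, 0 < m < n -> iter m (fxy mul x y) (x * s) <> x * s).
Proof.
move=> E n.
have Hit : iter n (fxy mul x y) (x * s) = x * s by apply: iter_order; apply: fxy_inj.
have Hmin : forall m, 0 < m < n -> iter m (fxy mul x y) (x * s) <> x * s.
  move=> m /andP[m0 mn] H.
  have U := orbit_uniq (fxy mul x y) (x * s).
  have := nth_uniq (x * s) (i:=m) (j:=0) _ _ U.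
  rewrite /orbit size_traject -/n !nth_traject ?(leq_trans m0 (ltnW mn)) //=.
  move=> /(_ mn isT); rewrite H eqxx => /esym /eqP Hm.
  by rewrite Hm in m0.
split; last by split.
split; first exact: order_gt0.
split; first by apply/(iter_fix _ E).
by move=> m Hm; apply/(iter_fix _ E); apply: Hmin.
Qed.

Section Count.
Variable S : {set T}.
Hypothesis hS : is_subloop mul e S.

Lemma S1 : e \in S. Proof. by case: hS. Qed.
Lemma SM a b : a \in S -> b \in S -> a * b \in S.
Proof. by case: hS => _ [H _]; apply: H. Qed.
Lemma SV a : a \in S -> iv a \in S.
Proof. by case: hS => _ [_ [H _]] Ha; apply: (H a e) => //; [exact: S1|exact: linvP]. Qed.
Lemma lcosetP x z : reflect (exists2 s, s \in S & z = x * s) (z \in lcoset mul x S).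
Proof. by apply: (iffP imsetP). Qed.
Lemma ldivS x z : z \in lcoset mul x S -> ldiv mul x z \in S.
Proof. by case/lcosetP => s Hs ->; rewrite ldivK. Qed.

Variables x y : T.
Local Notation f := (fxy mul x y).
Local Notation I := (lcoset mul x S :&: lcoset mul y S).
Definition rat z := ldiv mul x z * iv (ldiv mul y z).

Lemma f_closed z : z \in I -> f z \in I.
Proof.
case/setIP => zx zy; set s := ldiv mul x z; set r := ldiv mul y z.
have sS : s \in S by exact: ldivS.
have rS : r \in S by exact: ldivS.
have E : x * s = y * r by rewrite !ldivP.
rewrite /fxy -/s; apply/setIP; split; apply/lcosetP; last by exists s.
by exists ((s * iv r) * s); [rewrite !SM ?SV | exact: step].
Qed.

Lemma conn_closed z w : z \in I -> fconnect f z w -> w \in I.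
Proof.
move=> zI; rewrite fconnect_orbit => /trajectP [i _ ->].
by elim: i => //= i IH; apply: f_closed.
Qed.

Lemma rat_prop z : x != y -> z \in I ->
  [/\ rat z \in S, rat z <> e & is_order mul e (rat z) (order f z)].
Proof.
move=> xy /setIP [zx zy]; set s := ldiv mul x z; set r := ldiv mul y z.
have sS : s \in S by exact: ldivS.
have rS : r \in S by exact: ldivS.
have E : x * s = y * r by rewrite !ldivP.
split; first by rewrite SM ?SV.
  rewrite /rat -/s -/r => H.
  have sr : s = r by apply: (@rcan (iv r)); rewrite H linvP.
  by move: E; rewrite sr => /rcan /eqP; rewrite (negbTE xy).
by have [] := part1 E; rewrite /rat -/s -/r ldivP.
Qed.

Lemma count_ne : x != y -> exists l : seq (T * nat),
  (forall p, p \in l -> [/\ p.1 \in S, p.1 <> e & is_order mul e p.1 p.2]) /\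
  #|I| = sumn (map snd l).
Proof.
move=> xy.
pose R := fun u v => fconnect f u v.
have finj : injective f := @fxy_inj x y.
have eqR : forall a b c, R a b -> R a c = R b c.
  move=> a b c Rab; apply/idP/idP => H; first by apply: connect_trans H; rewrite /R fconnect_sym.
  exact: connect_trans Rab H.
have eqiR : {in I & &, equivalence_rel R}.
  by move=> a b c _ _ _; split; [exact: connect0 | exact: eqR].
pose P := equivalence_partition R I.
have cardB : forall z, z \in I -> #|[set w in I | R z w]| = order f z.
  move=> z zI; apply: eq_card => w; rewrite !inE.
  rewrite -in_setI; apply/andP/idP => [[]//|H]; split => //; exact: (conn_closed zI H).
pose rep (B : {set T}) := odflt e [pick z in B].
have repP : forall B, B \in P -> rep B \in I /\ #|B| = order f (rep B).
  move=> B /imsetP [z zI ->].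
  have zB : z \in [set w in I | R z w] by rewrite inE zI; exact: connect0.
  rewrite /rep; case: pickP => [w|]; last by move/(_ z); rewrite zB.
  rewrite inE => /andP [wI Rzw] /=; split => //.
  rewrite -cardB //; apply: eq_card => u; rewrite !inE.
  by rewrite (eqR _ _ _ Rzw).
exists [seq (rat (rep B), #|B|) | B <- enum P]; split.
  move=> p /mapP [B]; rewrite mem_enum => BP -> /=.
  have [rI ->] := repP B BP; exact: rat_prop.
rewrite (card_partition (equivalence_partitionP eqiR)) -map_comp sumnE big_map.
by rewrite big_enum.
Qed.
End Count.
End Alg.

Theorem lemma6p2 (T : finType) (mul : T -> T -> T) (e : T)
  (hQ : is_moufang_loop mul e) (S : {set T}) (hS : is_subloop mul e S)
  (x y : T) (hne : lcoset mul x S :&: lcoset mul y S != set0) :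
  (forall s r, s \in S -> r \in S -> mul x s = mul y r ->
     exists n, is_order mul e (mul s (linv mul e r)) n /\
       iter n (fxy mul x y) (mul x s) = mul x s /\
       (forall m, 0 < m < n -> iter m (fxy mul x y) (mul x s) <> mul x s)) /\
  (S != [set e] ->
     exists l : seq (T * nat),
       (forall p, p \in l -> [/\ p.1 \in S, p.1 <> e & is_order mul e p.1 p.2]) /\
       #|lcoset mul x S :&: lcoset mul y S| = sumn (map snd l)).
Proof.
split.
  move=> s r _ _ E; have [H1 [H2 H3]] := part1 hQ E.
  by exists (order (fxy mul x y) (mul x s)).
move=> Sne; case: (eqVneq x y) => [<-|xy]; last exact: count_ne.
have [g /andP [gS ge]] : exists g, (g \in S) && (g != e).
  apply/existsP; apply: contraNT Sne; rewrite negb_exists => /forallP H.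
  apply/eqP/setP => z; rewrite inE; apply/idP/eqP => [zS|->]; last exact: S1 hS.
  by move: (H z); rewrite zS /= negbK => /eqP.
have [l [Hl Hc]] := count_ne hQ hS (x:=e) (y:=g) (ltac:(by rewrite eq_sym)).
exists l; split => //; rewrite -Hc setIid.
have cS : forall a, #|lcoset mul a S| = #|S|.
  by move=> a; rewrite card_imset //; move=> u v; apply: (lcan hQ).
have -> : lcoset mul e S = S.
  apply/setP=> z; apply/imsetP/idP => [[s sS ->]|zS]; first by rewrite mul1.
  by exists z; rewrite ?mul1.
have sub : lcoset mul g S \subset S.
  apply/subsetP => z; rewrite /lcoset => /imsetP [s sS ->]; exact: (SM hS gS sS).
by rewrite (setIidPr sub) !cS.
Qed.
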